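(* Suppose $\bar f:[a,b]\to\mathbb{R}_\mathcal{I}$ is differentiable on $[a,b]$ and $g:[a,b]\to[a,b]$ is differentiable. Then for every $x\in[a,b]$, $$(\bar f\circ g)'(x)=\bar f'(y)\,g'(x),\qquad y=g(x),$$ where $\bar f'(y)\,g'(x)$ denotes the scalar multiple $g'(x)\bar f'(y)$.
   Context: An interval number is a closed interval $\bar a=[a_l,a_r]$ with $a_l<a_r$ real; $\mathbb{R}_\mathcal{I}$ is the set of interval numbers. Write $a_c=(a_l+a_r)/2$, $a_w=(a_r-a_l)/2>0$, $\bar a=\langle a_c;a_w\rangle=[a_c-a_w,a_c+a_w]$. Operations: $\bar a-\bar b=\langle a_c-b_c;a_w/b_w\rangle$, $k\bar a=\langle ka_c;a_w^k\rangle$ for $k\in\mathbb{R}$ (a product of an interval number with a real number $k$ is this scalar multiple); for real $h\neq0$, $\bar c/h=\langle c_c/h;c_w^{1/h}\rangle$. Distance $d(\bar a,\bar b)=\sqrt{(a_c-b_c)^2+(\ln a_w-\ln b_w)^2}$; limits are with respect to $d$. $\bar f$ is differentiable at $x_0$ if $\bar f'(x_0)=\lim_{h\to0}\frac{\bar f(x_0+h)-\bar f(x_0)}{h}$ exists in $\mathbb{R}_\mathcal{I}$ (with $x_0+h\in[a,b]$); differentiable on $[a,b]$ if at every point. *)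

(* Defs.v *)
From Stdlib Require Import Reals Lra.
Open Scope R_scope.

(* An interval number <c; w> = [c - w, c + w] with w > 0. *)
Record inum : Type := INum { ic : R; iw : R; iw_pos : 0 < iw }.

Definition isub (a b : inum) : inum :=
  INum (ic a - ic b) (iw a / iw b) (Rdiv_lt_0_compat _ _ (iw_pos a) (iw_pos b)).

Definition iscal (k : R) (a : inum) : inum :=
  INum (k * ic a) (Rpower (iw a) k) (exp_pos _).

Definition idivr (c : inum) (h : R) : inum :=
  INum (ic c / h) (Rpower (iw c) (1 / h)) (exp_pos _).

Definition idist (a b : inum) : R :=
  sqrt ((ic a - ic b) ^ 2 + (ln (iw a) - ln (iw b)) ^ 2).

Definition is_iderive (a b : R) (f : R -> inum) (x0 : R) (L : inum) : Prop :=
  forall eps, 0 < eps -> exists delta, 0 < delta /\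
    forall h, h <> 0 -> Rabs h < delta -> a <= x0 + h <= b ->
      idist (idivr (isub (f (x0 + h)) (f x0)) h) L < eps.

Definition idifferentiable_at (a b : R) (f : R -> inum) (x0 : R) : Prop :=
  exists L, is_iderive a b f x0 L.

Definition idifferentiable_on (a b : R) (f : R -> inum) : Prop :=
  forall x, a <= x <= b -> idifferentiable_at a b f x.

Definition is_rderive (a b : R) (g : R -> R) (x0 l : R) : Prop :=
  forall eps, 0 < eps -> exists delta, 0 < delta /\
    forall h, h <> 0 -> Rabs h < delta -> a <= x0 + h <= b ->
      Rabs ((g (x0 + h) - g x0) / h - l) < eps.

Definition rdifferentiable_on (a b : R) (g : R -> R) : Prop :=
  forall x, a <= x <= b -> exists l, is_rderive a b g x l.

(* Main.v *)
Require Import Defs.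
From Stdlib Require Import Reals Lra.
Open Scope R_scope.

Lemma rchain (a b : R) (F g : R -> R) (x lF lg : R) :
  (forall t, a <= t <= b -> a <= g t <= b) -> a <= x <= b ->
  is_rderive a b F (g x) lF -> is_rderive a b g x lg ->
  is_rderive a b (fun t => F (g t)) x (lg * lF).
Proof.
intros hgm hx HF Hg eps Heps.
set (A := Rabs lg + 1). set (B := Rabs lF + 1).
assert (HA : 0 < A) by (unfold A; pose proof (Rabs_pos lg); lra).
assert (HB : 0 < B) by (unfold B; pose proof (Rabs_pos lF); lra).
set (e1 := eps / (2 * A)). set (e2 := eps / (2 * B)).
assert (He1 : e1 * (2 * A) = eps) by (unfold e1; field; lra).
assert (He2 : e2 * (2 * B) = eps) by (unfold e2; field; lra).
assert (He1p : 0 < e1) by (unfold e1; apply Rdiv_lt_0_compat; lra).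
assert (He2p : 0 < e2) by (unfold e2; apply Rdiv_lt_0_compat; lra).
destruct (HF e1 He1p) as [d1 [Hd1 H1]].
destruct (Hg 1 Rlt_0_1) as [d2 [Hd2 H2]].
destruct (Hg e2 He2p) as [d3 [Hd3 H3]].
set (v := d1 / A).
assert (Hv : v * A = d1) by (unfold v; field; lra).
assert (Hvp : 0 < v) by (unfold v; apply Rdiv_lt_0_compat; lra).
exists (Rmin (Rmin d2 d3) v). split.
{ apply Rmin_pos; [apply Rmin_pos|]; lra. }
intros h hne hlt hin.
assert (hl2 : Rabs h < d2).
{ eapply Rlt_le_trans; [exact hlt|]. eapply Rle_trans; [apply Rmin_l|apply Rmin_l]. }
assert (hl3 : Rabs h < d3).
{ eapply Rlt_le_trans; [exact hlt|]. eapply Rle_trans; [apply Rmin_l|apply Rmin_r]. }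
assert (hlv : Rabs h < v).
{ eapply Rlt_le_trans; [exact hlt|]. apply Rmin_r. }
specialize (H2 h hne hl2 hin). specialize (H3 h hne hl3 hin).
set (k := g (x + h) - g x) in *.
set (r := k / h) in *.
assert (Hr : Rabs r < A).
{ pose proof (Rabs_triang (r - lg) lg) as T.
  replace (r - lg + lg) with r in T by ring. unfold A; lra. }
pose proof (Rabs_pos lF) as PF. pose proof (Rabs_pos lg) as PG.
destruct (Req_dec k 0) as [Hk|Hk].
- assert (E : g (x + h) = g x) by (unfold k in Hk; lra).
  rewrite E. replace ((F (g x) - F (g x)) / h - lg * lF) with (- (lg * lF)) by (field; auto).
  rewrite Rabs_Ropp, Rabs_mult.
  assert (Er : r = 0) by (unfold r; rewrite Hk; field; auto).
  rewrite Er in H3. replace (0 - lg) with (- lg) in H3 by ring. rewrite Rabs_Ropp in H3.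
  assert (Rabs lg * Rabs lF <= e2 * Rabs lF) by (apply Rmult_le_compat_r; lra).
  assert (e2 * Rabs lF < e2 * B) by (apply Rmult_lt_compat_l; unfold B; lra).
  lra.
- assert (Hkd : Rabs k < d1).
  { replace k with (r * h) by (unfold r; field; auto). rewrite Rabs_mult.
    assert (Rabs r * Rabs h <= A * Rabs h) by (apply Rmult_le_compat_r; [apply Rabs_pos|lra]).
    assert (A * Rabs h < A * v) by (apply Rmult_lt_compat_l; lra). lra. }
  assert (Hin : a <= g x + k <= b).
  { replace (g x + k) with (g (x + h)) by (unfold k; ring). apply hgm. lra. }
  specialize (H1 k Hk Hkd Hin).
  replace (g x + k) with (g (x + h)) in H1 by (unfold k; ring).
  set (Q := (F (g (x + h)) - F (g x)) / k) in *.
  replace ((F (g (x + h)) - F (g x)) / h - lg * lF) with (r * (Q - lF) + (r - lg) * lF)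
    by (unfold Q, r; field; auto).
  eapply Rle_lt_trans; [apply Rabs_triang|]. rewrite !Rabs_mult.
  assert (Rabs r * Rabs (Q - lF) <= A * e1).
  { apply Rmult_le_compat; try apply Rabs_pos; lra. }
  assert (Rabs (r - lg) * Rabs lF <= e2 * Rabs lF).
  { apply Rmult_le_compat_r; lra. }
  assert (e2 * Rabs lF < e2 * B) by (apply Rmult_lt_compat_l; unfold B; lra).
  lra.
Qed.

Lemma ln_q (p q : inum) (h : R) :
  ln (iw (idivr (isub p q) h)) = (ln (iw p) - ln (iw q)) / h.
Proof.
simpl. unfold Rpower. rewrite ln_exp. replace (iw p / iw q) with (iw p * / iw q) by reflexivity. rewrite ln_mult, ln_Rinv; try apply iw_pos; try apply Rinv_0_lt_compat, iw_pos.
unfold Rdiv. ring.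
Qed.

Lemma abs_le_sqrt (u w : R) : Rabs u <= sqrt (u ^ 2 + w ^ 2).
Proof.
rewrite <- (sqrt_pow2 (Rabs u)) by apply Rabs_pos.
apply sqrt_le_1_alt. rewrite pow2_abs. nra.
Qed.

Lemma abs_le_sqrt2 (u w : R) : Rabs w <= sqrt (u ^ 2 + w ^ 2).
Proof. rewrite Rplus_comm. apply abs_le_sqrt. Qed.

Lemma sqrt_le_abs (u w : R) : sqrt (u ^ 2 + w ^ 2) <= Rabs u + Rabs w.
Proof.
pose proof (Rabs_pos u). pose proof (Rabs_pos w).
rewrite <- (sqrt_pow2 (Rabs u + Rabs w)) by lra.
apply sqrt_le_1_alt.
replace ((Rabs u + Rabs w) ^ 2) with (Rabs u ^ 2 + Rabs w ^ 2 + 2 * Rabs u * Rabs w) by ring.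
rewrite !pow2_abs. nra.
Qed.

Lemma to_comp (a b : R) (f : R -> inum) (x : R) (L : inum) :
  is_iderive a b f x L ->
  is_rderive a b (fun t => ic (f t)) x (ic L) /\
  is_rderive a b (fun t => ln (iw (f t))) x (ln (iw L)).
Proof.
intros H. split; intros eps Heps; destruct (H eps Heps) as [d [Hd Hh]];
  exists d; split; auto; intros h hne hlt hin; specialize (Hh h hne hlt hin);
  unfold idist in Hh; rewrite ln_q in Hh; simpl ic in Hh.
- eapply Rle_lt_trans; [apply abs_le_sqrt|exact Hh].
- eapply Rle_lt_trans; [|exact Hh].
  apply abs_le_sqrt2.
Qed.

Lemma from_comp (a b : R) (f : R -> inum) (x : R) (L : inum) :
  is_rderive a b (fun t => ic (f t)) x (ic L) ->
  is_rderive a b (fun t => ln (iw (f t))) x (ln (iw L)) ->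
  is_iderive a b f x L.
Proof.
intros H1 H2 eps Heps.
destruct (H1 (eps/2)) as [d1 [Hd1 K1]]; [lra|].
destruct (H2 (eps/2)) as [d2 [Hd2 K2]]; [lra|].
exists (Rmin d1 d2). split; [apply Rmin_pos; lra|].
intros h hne hlt hin.
assert (Rabs h < d1) by (eapply Rlt_le_trans; [exact hlt|apply Rmin_l]).
assert (Rabs h < d2) by (eapply Rlt_le_trans; [exact hlt|apply Rmin_r]).
specialize (K1 h hne H hin). specialize (K2 h hne H0 hin).
unfold idist. rewrite ln_q. simpl ic.
eapply Rle_lt_trans; [apply sqrt_le_abs|]. lra.
Qed.

Theorem theorem4p7 (a b : R) (f : R -> inum) (g : R -> R)
  (hab : a < b)
  (hf : idifferentiable_on a b f)
  (hgmap : forall x, a <= x <= b -> a <= g x <= b)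
  (hg : rdifferentiable_on a b g) :
  forall x, a <= x <= b ->
    forall (Lf : inum) (lg : R),
      is_iderive a b f (g x) Lf ->
      is_rderive a b g x lg ->
      is_iderive a b (fun t => f (g t)) x (iscal lg Lf).
Proof.
intros x hx Lf lg Hf Hg.
destruct (to_comp _ _ _ _ _ Hf) as [C W].
apply from_comp.
- replace (ic (iscal lg Lf)) with (lg * ic Lf) by reflexivity.
  apply (rchain a b (fun y => ic (f y)) g x); auto.
- replace (ln (iw (iscal lg Lf))) with (lg * ln (iw Lf))
    by (simpl; unfold Rpower; rewrite ln_exp; ring).
  apply (rchain a b (fun y => ln (iw (f y))) g x); auto.
Qed.
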